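(* Let $(S,\curlyvee)$ be a $\curlyvee$-algebra and let $I$ be a relatively maximal $\lesssim$-ideal of $S$ (i.e., relatively maximal with respect to not containing some $d\in S$). Define $E_I=\{(a,b)\in S\times S: a\notin I,\ b\notin I,\ a\curlyvee b\notin I\}$ and $\epsilon_I=E_I\cup(I\times I)$. Then $\epsilon_I$ is a congruence on $(S,\curlyvee)$ and $S/\epsilon_I$ is a flat $\curlyvee$-algebra. Moreover, $S$ is a subdirect product of the algebras $S/\epsilon_I$ as $I$ ranges over all relatively maximal $\lesssim$-ideals of $S$.
   Context: A $\curlyvee$-algebra is an algebra $(S,\curlyvee)$ with one binary operation such that, defining $a\sqcup b=a\curlyvee(a\curlyvee b)$ and $a\lesssim b$ iff $b\sqcup a=b$: $\sqcup$ is associative, $a\sqcup a=a$ and $a\sqcup b=(a\sqcup b)\sqcup a$; $\curlyvee$ is commutative and idempotent; $(a\curlyvee b)\sqcup(a\sqcup b)=a\sqcup b$; $a\sqcup(b\curlyvee c)=(a\sqcup b)\curlyvee(a\sqcup c)$; and if $d\lesssim a,b,c,a\curlyvee b,b\curlyvee c$ then $d\lesssim a\curlyvee c$. A $\lesssim$-ideal is a non-empty subset $I$ that is a down-set under $\lesssim$ with $i\sqcup j\in I$ for all $i,j\in I$; it is relatively maximal with respect to not containing $d$ if $d\notin I$ and no $\lesssim$-ideal properly containing $I$ omits $d$. A flat $\curlyvee$-algebra is an algebra $(T,\curlyvee)$ with an element $0$ such that $a\curlyvee b=0$ for distinct $a,b$ both different from $0$, and $a\curlyvee a=a$, $a\curlyvee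 0=0\curlyvee a=a$ for all $a$. *)

(* Defs.v *)
Set Implicit Arguments.

Section VeeAlgebra.
Variable S : Type.
Variable op : S -> S -> S.

Definition sqcup (a b : S) : S := op a (op a b).
Definition lesssim (a b : S) : Prop := sqcup b a = b.

Definition vee_algebra : Prop :=
  (forall a b c, sqcup a (sqcup b c) = sqcup (sqcup a b) c) /\
  (forall a, sqcup a a = a) /\
  (forall a b, sqcup a b = sqcup (sqcup a b) a) /\
  (forall a b, op a b = op b a) /\
  (forall a, op a a = a) /\
  (forall a b, sqcup (op a b) (sqcup a b) = sqcup a b) /\
  (forall a b c, sqcup a (op b c) = op (sqcup a b) (sqcup a c)) /\
  (forall a b c d, lesssim d a -> lesssim d b -> lesssim d c ->
      lesssim d (op a b) -> lesssim d (op b c) -> lesssim d (op a c)).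

Definition lesssim_ideal (I : S -> Prop) : Prop :=
  (exists i, I i) /\
  (forall a b, I b -> lesssim a b -> I a) /\
  (forall i j, I i -> I j -> I (sqcup i j)).

Definition rel_max_wrt (I : S -> Prop) (d : S) : Prop :=
  lesssim_ideal I /\ ~ I d /\
  (forall J, lesssim_ideal J -> (forall x, I x -> J x) ->
      (exists x, J x /\ ~ I x) -> J d).

Definition rel_max_ideal (I : S -> Prop) : Prop := exists d, rel_max_wrt I d.

Definition E_I (I : S -> Prop) (a b : S) : Prop := ~ I a /\ ~ I b /\ ~ I (op a b).
Definition eps_I (I : S -> Prop) (a b : S) : Prop := E_I I a b \/ (I a /\ I b).

Definition congruence (e : S -> S -> Prop) : Prop :=
  (forall a, e a a) /\ (forall a b, e a b -> e b a) /\
  (forall a b c, e a b -> e b c -> e a c) /\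
  (forall a a' b b', e a a' -> e b b' -> e (op a b) (op a' b')).

End VeeAlgebra.

Definition flat (T : Type) (opT : T -> T -> T) : Prop :=
  exists z : T,
    (forall a b, a <> b -> a <> z -> b <> z -> opT a b = z) /\
    (forall a, opT a a = a) /\
    (forall a, opT a z = a /\ opT z a = a).

(* (T, opT) together with q : S -> T is (isomorphic to) the quotient algebra
   S/e: q is a surjective homomorphism whose kernel is exactly e. *)
Definition is_quotient (S : Type) (op : S -> S -> S) (e : S -> S -> Prop)
  (T : Type) (opT : T -> T -> T) (q : S -> T) : Prop :=
  (forall t, exists a, q a = t) /\
  (forall a b, q a = q b <-> e a b) /\
  (forall a b, q (op a b) = opT (q a) (q b)).

(* Main.v *)
From mathcomp Require Import all_boot classical_sets boolp.
Local Open Scope classical_set_scope.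
Lemma zorn_sets (T : Type) (P : (T -> Prop) -> Prop) :
  (forall F : (T -> Prop) -> Prop, (forall X, F X -> P X) ->
     (forall X Y, F X -> F Y -> (forall x, X x -> Y x) \/ (forall x, Y x -> X x)) ->
     P (fun x => exists X, F X /\ X x)) ->
  exists A, P A /\ forall B, (forall x, A x -> B x) -> (exists x, B x /\ ~ A x) -> ~ P B.
Proof.
move=> H.
have HZ : forall F : set (set T), F `<=` P -> total_on F subset ->
      P (\bigcup_(X in F) X).
  move=> F FP Ftot.
  have -> : (\bigcup_(X in F) X) = (fun x => exists X, F X /\ X x).
    apply/funext => x; apply/propext; split.
      by case=> X FX Xx; exists X.
    by case=> X [FX Xx]; exists X.
  apply: H => [X FX|X Y FX FY]; first by apply: FP.
  case: (Ftot X Y FX FY) => h; [left|right] => y; apply: h.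
have [A [PA Amax]] := Zorn_bigcup HZ.
exists A; split => // B AB [x [Bx nAx]] PB.
apply: (Amax B) => //; split; first by move=> y; apply: AB.
by move=> BA; apply: nAx; apply: BA.
Qed.

Require Import Defs.
From Stdlib Require Import Classical ProofIrrelevance.
Set Implicit Arguments.

Ltac dHS HS := let A1 := fresh "sqA" in let A2 := fresh "sqI" in let A3 := fresh "sqR" in
  let A4 := fresh "opC" in let A5 := fresh "opI" in let A6 := fresh "opL" in
  let A7 := fresh "sqD" in let A8 := fresh "ax8" in
  case: HS => A1 [A2 [A3 [A4 [A5 [A6 [A7 A8]]]]]].

Lemma vle_refl S (op : S -> S -> S) (HS : vee_algebra op) a : lesssim op a a.
Proof. dHS HS; exact: sqI. Qed.

Lemma vle_trans S (op : S -> S -> S) (HS : vee_algebra op) a b c :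
  lesssim op a b -> lesssim op b c -> lesssim op a c.
Proof. dHS HS; rewrite /lesssim => H1 H2. by rewrite -H2 -sqA H1. Qed.

Lemma vle_l S (op : S -> S -> S) (HS : vee_algebra op) a b : lesssim op a (sqcup op a b).
Proof. dHS HS; rewrite /lesssim. by rewrite -sqR. Qed.

Lemma vle_r S (op : S -> S -> S) (HS : vee_algebra op) a b : lesssim op b (sqcup op a b).
Proof. dHS HS; rewrite /lesssim. by rewrite -sqA sqI. Qed.

Lemma vle_lub S (op : S -> S -> S) (HS : vee_algebra op) a b c :
  lesssim op a c -> lesssim op b c -> lesssim op (sqcup op a b) c.
Proof. dHS HS; rewrite /lesssim => H1 H2. by rewrite sqA H1 H2. Qed.

Lemma vle_op S (op : S -> S -> S) (HS : vee_algebra op) a b : lesssim op (op a b) (sqcup op a b).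
Proof.
have H6 := HS; dHS H6; rewrite /lesssim.
have E := opL a b.
rewrite -[in LHS]E. by rewrite -sqR E.
Qed.

Section Ideals.
End Ideals.

Lemma id_down S (op : S -> S -> S) I (HI : lesssim_ideal op I) a b :
  I b -> lesssim op a b -> I a.
Proof. case: HI => _ [H _]; exact: H. Qed.

Lemma id_sq S (op : S -> S -> S) I (HI : lesssim_ideal op I) a b :
  I a -> I b -> I (sqcup op a b).
Proof. case: HI => _ [_ H]; exact: H. Qed.

Lemma id_sq_l S (op : S -> S -> S) (HS : vee_algebra op) I (HI : lesssim_ideal op I) a b :
  I (sqcup op a b) -> I a.
Proof. move=> H; exact: (id_down HI H (vle_l HS a b)). Qed.

Lemma id_sq_r S (op : S -> S -> S) (HS : vee_algebra op) I (HI : lesssim_ideal op I) a b :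
  I (sqcup op a b) -> I b.
Proof. move=> H; exact: (id_down HI H (vle_r HS a b)). Qed.

Lemma id_op S (op : S -> S -> S) (HS : vee_algebra op) I (HI : lesssim_ideal op I) a b :
  I a -> I b -> I (op a b).
Proof.
move=> Ha Hb; exact: (id_down HI (id_sq HI _ _ Ha Hb) (vle_op HS a b)).
Qed.

Lemma id_op_out S (op : S -> S -> S) (HS : vee_algebra op) I (HI : lesssim_ideal op I) a b :
  I a -> ~ I b -> ~ I (op a b).
Proof.
move=> Ha Hb Hab; apply: Hb.
exact: (id_sq_r HS HI a b (id_op HS HI _ _ Ha Hab)).
Qed.

Lemma id_sq_out S (op : S -> S -> S) (HS : vee_algebra op) I (HI : lesssim_ideal op I) a b :
  ~ I a -> ~ I (sqcup op a b).
Proof. move=> Ha H; apply: Ha; exact: (id_sq_l HS HI a b H). Qed.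

Lemma key S (op : S -> S -> S) (HS : vee_algebra op) I d x :
  rel_max_wrt op I d -> ~ I x -> exists i, I i /\ lesssim op d (sqcup op x i).
Proof.
case=> HI [nId Hmax] nIx.
have [i0 Ii0] : exists i, I i by case: HI.
pose J y := exists i, I i /\ lesssim op y (sqcup op x i).
have : J d.
  apply: Hmax.
  - split; first by exists x, i0; split => //; exact: vle_l.
    split.
      move=> a b [i [Ii Hb]] Hab; exists i; split => //; exact (vle_trans HS Hab Hb).
    move=> a b [i [Ii Ha]] [j [Ij Hb]]; exists (sqcup op i j); split.
      exact (id_sq HI _ _ Ii Ij).
    have Hx : lesssim op x (sqcup op x (sqcup op i j)) by exact (vle_l HS _ _).
    have Hij : lesssim op (sqcup op i j) (sqcup op x (sqcup op i j)) by exact (vle_r HS _ _).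
    apply (vle_lub HS).
      apply (vle_trans HS Ha); apply (vle_lub HS Hx).
      exact (vle_trans HS (vle_l HS i j) Hij).
    apply (vle_trans HS Hb); apply (vle_lub HS Hx).
    exact (vle_trans HS (vle_r HS i j) Hij).
  - move=> y Iy; exists y; split => //; exact (vle_r HS _ _).
  - exists x; split => //; exists i0; split => //; exact (vle_l HS _ _).
by [].
Qed.

Lemma lift_le S (op : S -> S -> S) (HS : vee_algebra op) d x k i :
  lesssim op d (sqcup op x k) -> lesssim op k i -> lesssim op d (sqcup op i x).
Proof.
move=> H Hk; apply (vle_trans HS H); apply (vle_lub HS).
  exact (vle_r HS _ _).
exact (vle_trans HS Hk (vle_l HS _ _)).
Qed.

Lemma E_trans S (op : S -> S -> S) (HS : vee_algebra op) I d (HR : rel_max_wrt op I d) a b c :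
  E_I op I a b -> E_I op I b c -> E_I op I a c.
Proof.
case=> na [nb nab] [_ [nc nbc]]; split => //; split => // Hac.
have HR' := HR; case: HR' => HI [nId _].
have [i1 [I1 H1]] := key HS _ HR na.
have [i2 [I2 H2]] := key HS _ HR nb.
have [i3 [I3 H3]] := key HS _ HR nc.
have [i4 [I4 H4]] := key HS _ HR nab.
have [i5 [I5 H5]] := key HS _ HR nbc.
pose i := sqcup op i1 (sqcup op i2 (sqcup op i3 (sqcup op i4 i5))).
have Ii : I i.
  apply (id_sq HI _ _ I1); apply (id_sq HI _ _ I2); apply (id_sq HI _ _ I3).
  exact (id_sq HI _ _ I4 I5).
have L1 : lesssim op i1 i by exact (vle_l HS _ _).
have L2' : lesssim op (sqcup op i2 (sqcup op i3 (sqcup op i4 i5))) i by exact (vle_r HS _ _).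
have L2 : lesssim op i2 i by exact (vle_trans HS (vle_l HS _ _) L2').
have L3' : lesssim op (sqcup op i3 (sqcup op i4 i5)) i by exact (vle_trans HS (vle_r HS _ _) L2').
have L3 : lesssim op i3 i by exact (vle_trans HS (vle_l HS _ _) L3').
have L4' : lesssim op (sqcup op i4 i5) i by exact (vle_trans HS (vle_r HS _ _) L3').
have L4 : lesssim op i4 i by exact (vle_trans HS (vle_l HS _ _) L4').
have L5 : lesssim op i5 i by exact (vle_trans HS (vle_r HS _ _) L4').
have G1 := @lift_le _ _ HS _ _ _ _ H1 L1.
have G2 := @lift_le _ _ HS _ _ _ _ H2 L2.
have G3 := @lift_le _ _ HS _ _ _ _ H3 L3.
have G4 := @lift_le _ _ HS _ _ _ _ H4 L4.
have G5 := @lift_le _ _ HS _ _ _ _ H5 L5.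
have HS' := HS; dHS HS'.
rewrite sqD in G4; rewrite sqD in G5.
have G := ax8 _ _ _ _ G1 G2 G3 G4 G5.
rewrite -sqD in G.
apply: nId; apply (id_down HI (id_sq HI _ _ Ii Hac) G).
Qed.

Lemma eps_refl S (op : S -> S -> S) (HS : vee_algebra op) I a : eps_I op I a a.
Proof.
have HS' := HS; dHS HS'.
case: (classic (I a)) => H; [right; split => // | left; split => //; split => //].
by rewrite opI.
Qed.

Lemma eps_sym S (op : S -> S -> S) (HS : vee_algebra op) I a b :
  eps_I op I a b -> eps_I op I b a.
Proof.
have HS' := HS; dHS HS'.
case=> [[na [nb nab]]|[Ia Ib]]; [left|right] => //.
by split => //; split => //; rewrite opC.
Qed.

Lemma eps_trans S (op : S -> S -> S) (HS : vee_algebra op) I d (HR : rel_max_wrt op I d) a b c :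
  eps_I op I a b -> eps_I op I b c -> eps_I op I a c.
Proof.
case=> [Eab|[Ia Ib]] [Ebc|[Ib' Ic]].
- left; exact (E_trans HS HR Eab Ebc).
- by case: Eab => _ [nb _].
- by case: Ebc => nb _.
- by right.
Qed.

Lemma eps_absorb S (op : S -> S -> S) (HS : vee_algebra op) I (HI : lesssim_ideal op I) a b :
  ~ I a -> ~ I (op a b) -> eps_I op I (op a b) a.
Proof.
have HS' := HS; dHS HS'.
move=> na nab; left; split => //; split => //.
rewrite opC; exact (id_sq_out HS HI a b na).
Qed.

Lemma eps_absorbI S (op : S -> S -> S) (HS : vee_algebra op) I (HI : lesssim_ideal op I) a b :
  ~ I a -> I b -> eps_I op I (op a b) a.
Proof.
have HS' := HS; dHS HS'.
move=> na Ib; apply (eps_absorb HS HI a b na).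
rewrite opC; exact (id_op_out HS HI b a Ib na).
Qed.

Lemma E_sym S (op : S -> S -> S) (HS : vee_algebra op) I a b :
  E_I op I a b -> E_I op I b a.
Proof.
have HS' := HS; dHS HS'.
case=> na [nb nab]; split => //; split => //; by rewrite opC.
Qed.

Lemma eps_compat1 S (op : S -> S -> S) (HS : vee_algebra op) I d (HR : rel_max_wrt op I d) a b b' :
  eps_I op I b b' -> eps_I op I (op a b) (op a b').
Proof.
have HS' := HS; dHS HS'.
have HI : lesssim_ideal op I by case: HR.
have tr := @eps_trans _ _ HS _ _ HR.
have sy := @eps_sym _ _ HS I.
case=> [Eb|[Ib Ib']].
- have Eb' := Eb; case: Eb' => nb [nb' nbb'].
  case: (classic (I a)) => Ia.
  + have h1 : eps_I op I (op a b) b.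
      rewrite opC; exact (eps_absorbI HS HI b a nb Ia).
    have h2 : eps_I op I (op a b') b'.
      rewrite opC; exact (eps_absorbI HS HI b' a nb' Ia).
    apply (tr _ _ _ h1); apply (tr _ _ _ (or_introl Eb)); exact (sy _ _ h2).
  + case: (classic (I (op a b))) => Iab; case: (classic (I (op a b'))) => Iab'.
    * by right.
    * exfalso.
      have E1 : E_I op I a b' by split => //; split.
      have E2 := E_trans HS HR E1 (E_sym HS Eb).
      by case: E2 => _ [_ ?].
    * exfalso.
      have E1 : E_I op I a b by split => //; split.
      have E2 := E_trans HS HR E1 Eb.
      by case: E2 => _ [_ ?].
    * apply (tr _ _ _ (eps_absorb HS HI a b Ia Iab)).
      exact (sy _ _ (eps_absorb HS HI a b' Ia Iab')).
- case: (classic (I a)) => Ia.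
  + right; split; [exact (id_op HS HI _ _ Ia Ib)|exact (id_op HS HI _ _ Ia Ib')].
  + apply (tr _ _ _ (eps_absorbI HS HI a b Ia Ib)).
    exact (sy _ _ (eps_absorbI HS HI a b' Ia Ib')).
Qed.

Lemma eps_cong S (op : S -> S -> S) (HS : vee_algebra op) I d (HR : rel_max_wrt op I d) :
  congruence op (eps_I op I).
Proof.
have HS' := HS; dHS HS'.
split; first exact (eps_refl HS I).
split; first exact (@eps_sym _ _ HS I).
split; first exact (@eps_trans _ _ HS _ _ HR).
move=> a a' b b' Ha Hb.
apply (@eps_trans _ _ HS _ _ HR _ _ _ (eps_compat1 HS HR a Hb)).
rewrite (opC a b') (opC a' b'); exact (eps_compat1 HS HR b' Ha).
Qed.

Lemma sig_ext A (P : A -> Prop) (u v : sig P) : proj1_sig u = proj1_sig v -> u = v.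
Proof.
case: u => x px; case: v => y py /= E; subst y; f_equal; apply: Prop_irrelevance.
Qed.

Lemma quot_flat S (op : S -> S -> S) (HS : vee_algebra op) I d (HR : rel_max_wrt op I d) :
  exists (T : Type) (opT : T -> T -> T) (q : S -> T),
    is_quotient op (eps_I op I) opT q /\ flat opT.
Proof.
have HS' := HS; dHS HS'.
have HI : lesssim_ideal op I by case: HR.
have [rf [sy [tr cp]]] := eps_cong HS HR.
pose e := eps_I op I.
pose T := {P : S -> Prop | exists a, P = e a}.
pose q : S -> T := fun a => exist _ (e a) (ex_intro _ a erefl).
pose rep : T -> S := fun t => proj1_sig (cid (proj2_sig t)).
have repP : forall t, proj1_sig t = e (rep t).
  move=> t; rewrite /rep; case: (cid (proj2_sig t)) => x /= ->; done.
have qrep : forall t, q (rep t) = t.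
  move=> t; apply: sig_ext => /=; by rewrite -repP.
have qeq : forall a b, q a = q b <-> e a b.
  move=> a b; split.
    move=> /(f_equal (@proj1_sig _ _)) /= E.
    have := f_equal (fun f => f b) E => /= ->; exact: rf.
  move=> H; apply: sig_ext => /=; apply: funext => x; apply: propext; split.
    exact: (tr _ _ _ (sy _ _ H)).
  exact: (tr _ _ _ H).
pose opT : T -> T -> T := fun t u => q (op (rep t) (rep u)).
have hom : forall a b, q (op a b) = opT (q a) (q b).
  move=> a b; rewrite /opT; apply/qeq; apply: cp.
    apply: sy; apply/qeq; exact: qrep.
  apply: sy; apply/qeq; exact: qrep.
have surj : forall t, exists a, q a = t by move=> t; exists (rep t); exact: qrep.
exists T, opT, q; split; first by split => //.
have [i0 Ii0] : exists i, I i by case: HI.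
exists (q i0); split; last split.
- move=> t u; have [a <-] := surj t; have [b <-] := surj u.
  move=> nab na nb; rewrite -hom; apply/qeq; right; split => //.
  case: (classic (I (op a b))) => // nIab; exfalso.
  have nIa : ~ I a by move=> Ia; apply: na; apply/qeq; right.
  have nIb : ~ I b by move=> Ib; apply: nb; apply/qeq; right.
  by apply: nab; apply/qeq; left; split => //; split.
- move=> t; have [a <-] := surj t; by rewrite -hom opI.
- move=> t; have [a <-] := surj t.
  have H : q (op a i0) = q a.
    apply/qeq; case: (classic (I a)) => Ia.
      by right; split => //; exact: (id_op HS HI _ _ Ia Ii0).
    exact: (eps_absorbI HS HI a i0 Ia Ii0).
  by split; rewrite -hom ?H // opC H.
Qed.

Lemma extend S (op : S -> S -> S) (HS : vee_algebra op) I0 d :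
  lesssim_ideal op I0 -> ~ I0 d -> exists I, rel_max_wrt op I d /\ (forall x, I0 x -> I x).
Proof.
move=> HI0 nI0d.
pose Q (J : S -> Prop) := (forall x, I0 x -> J x) /\ (forall a b, J b -> lesssim op a b -> J a) /\
   (forall i j, J i -> J j -> J (sqcup op i j)) /\ ~ J d.
pose P (J : S -> Prop) := (forall x, ~ J x) \/ Q J.
have PQ : forall J x, P J -> J x -> Q J by move=> J x [H|H] Jx //; case: (H x).
have [i0 Ii0] : exists i, I0 i by case: HI0.
have QI0 : Q I0.
  case: HI0 => _ [H1 H2]; split => //.
have HZ : forall F : (S -> Prop) -> Prop, (forall X, F X -> P X) ->
     (forall X Y, F X -> F Y -> (forall x, X x -> Y x) \/ (forall x, Y x -> X x)) ->
     P (fun x => exists X, F X /\ X x).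
  move=> F FP Ftot.
  case: (classic (exists X x, F X /\ X x)) => [[X0 [x0 [FX0 X0x0]]]|Hn]; last first.
    by left => x [X [FX Xx]]; apply: Hn; exists X, x.
  right; split; last split; last split.
  - move=> x Ix; exists X0; split => //; have := PQ _ _ (FP _ FX0) X0x0; case=> H _; exact: H.
  - move=> a b [X [FX Xb]] Hab; exists X; split => //.
    case: (PQ _ _ (FP _ FX) Xb) => _ [H _]; exact: H _ _ Xb Hab.
  - move=> i j [X [FX Xi]] [Y [FY Yj]].
    case: (Ftot X Y FX FY) => sub.
      exists Y; split => //; case: (PQ _ _ (FP _ FY) Yj) => _ [_ [H _]]; apply: H => //; exact: sub.
    exists X; split => //; case: (PQ _ _ (FP _ FX) Xi) => _ [_ [H _]]; apply: H => //; exact: sub.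
  - move=> [X [FX Xd]]; case: (PQ _ _ (FP _ FX) Xd) => _ [_ [_ H]]; exact: H.
have [A [PA Amax]] := @zorn_sets S P HZ.
have QA : Q A.
  case: PA => // A0; exfalso; apply: (Amax I0).
  - by move=> x /A0.
  - by exists i0; split => //; apply: A0.
  - by right.
exists A; split; last by case: QA.
case: QA => QA1 [QA2 [QA3 QA4]].
split; first by split; [exists i0; exact: QA1 | split].
split => // J [[j Jj] [J2 J3]] AJ [x [Jx nAx]].
case: (classic (J d)) => // nJd; exfalso; apply: (Amax J) => //.
  by exists x.
right; split; first by move=> y /QA1 /AJ.
by split.
Qed.

Lemma principal S (op : S -> S -> S) (HS : vee_algebra op) x :
  lesssim_ideal op (fun y => lesssim op y x).
Proof.
split; first by exists x; exact (vle_refl HS x).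
split.
  move=> a b Hb Hab; exact (vle_trans HS Hab Hb).
move=> i j Hi Hj; exact (vle_lub HS Hi Hj).
Qed.

Lemma equiv_eq S (op : S -> S -> S) (HS : vee_algebra op) a b :
  lesssim op a b -> lesssim op b a -> lesssim op a (op a b) -> a = b.
Proof.
have HS' := HS; dHS HS'.
rewrite /lesssim /sqcup => Hab Hba Hac.
have E1 : op (op a b) a = a by rewrite opC Hba.
rewrite E1 E1 in Hac.
rewrite [op b a]opC -Hac in Hab.
by rewrite opC -Hac in Hab.
Qed.

Lemma separate S (op : S -> S -> S) (HS : vee_algebra op) a b :
  a <> b -> exists I, rel_max_ideal op I /\ ~ eps_I op I a b.
Proof.
move=> nab.
case: (classic (lesssim op a b)) => Hab; last first.
  have [I [HR sub]] := @extend _ _ HS _ _ (principal HS b) Hab.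
  exists I; split; first by exists a.
  have Ib : I b by apply: sub; exact (vle_refl HS b).
  case: HR => _ [nIa _].
  by case=> [[_ [nIb _]]|[Ia _]].
case: (classic (lesssim op b a)) => Hba; last first.
  have [I [HR sub]] := @extend _ _ HS _ _ (principal HS a) Hba.
  exists I; split; first by exists b.
  have Ia : I a by apply: sub; exact (vle_refl HS a).
  case: HR => _ [nIb _].
  by case=> [[nIa _]|[_ Ib]].
have Hc : ~ lesssim op a (op a b).
  by move=> H; apply: nab; exact (equiv_eq HS Hab Hba H).
have [I [HR sub]] := @extend _ _ HS _ _ (principal HS (op a b)) Hc.
exists I; split; first by exists a.
have Ic : I (op a b) by apply: sub; exact (vle_refl HS _).
case: HR => _ [nIa _].
by case=> [[_ [_ nIc]]|[Ia _]].
Qed.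

Theorem lemma4p6 (S : Type) (op : S -> S -> S) (HS : vee_algebra op) :
  (forall I : S -> Prop, rel_max_ideal op I ->
     congruence op (eps_I op I) /\
     exists (T : Type) (opT : T -> T -> T) (q : S -> T),
       is_quotient op (eps_I op I) opT q /\ flat opT) /\
  (* subdirect product: the canonical map a |-> (class of a in S/ε_I)_I
     into the product of the quotients is injective *)
  (forall a b : S,
     (forall I : S -> Prop, rel_max_ideal op I ->
        (forall x, eps_I op I a x <-> eps_I op I b x)) -> a = b).
Proof.
split.
  move=> I [d HR]; split; [exact (eps_cong HS HR) | exact (quot_flat HS HR)].
move=> a b H; apply: NNPP => nab.
have [I [HR nE]] := separate HS nab.
apply: nE; apply (proj2 (H I HR b)); exact (eps_refl HS I b).
Qed.
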